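(* Let $A\in\tilde\omega_n^{0,1}$ and let $C_1,\dots,C_k$ be all the directed cycles of $G_A$. Then $$\operatorname{per}(I-A)=\prod_{i=1}^k\big(1+(-1)^{l(C_i)}w(C_i)\big),$$ where the empty product equals $1$.
   Context: An $n\times n$ matrix is row substochastic if all its entries are nonnegative and each row sum is at most $1$. $\tilde\omega_n^{0,1}$ denotes the set of all $n\times n$ row substochastic matrices with zero main diagonal and at most one positive entry in each row. For an $n\times n$ matrix $A=[a_{ij}]$, $G_A$ is the directed weighted graph on vertices $v_1,\dots,v_n$ having a directed edge $v_i\to v_j$ of weight $a_{ij}$ exactly when $a_{ij}\ne 0$. For a directed cycle $C$ of $G_A$, $l(C)$ is its number of edges and $w(C)$ is the product of the weights of its edges. The permanent is $\operatorname{per}(M)=\sum_{\pi\in S_n}\prod_i m_{i\pi(i)}$, and $I$ is the identity matrix. *)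

(* Defs.v *)
From HB Require Import structures.
From mathcomp Require Import all_boot all_order all_algebra all_fingroup.
Set Implicit Arguments. Unset Strict Implicit. Unset Printing Implicit Defensive.
Import Order.TTheory GRing.Theory Num.Theory.
Local Open Scope ring_scope.

Definition per (R : comNzRingType) (n : nat) (M : 'M[R]_n) : R :=
  \sum_(s : 'S_n) \prod_(i < n) M i (s i).

(* A in tilde-omega_n^{0,1}: row substochastic, zero diagonal,
   at most one positive entry per row *)
Definition omega01 (R : realFieldType) (n : nat) (A : 'M[R]_n) : Prop :=
  [/\ forall i j, 0 <= A i j,
      forall i, \sum_(j < n) A i j <= 1,
      forall i, A i i = 0
    & forall i j k, 0 < A i j -> 0 < A i k -> j = k].

Definition edgeA (R : comNzRingType) (n : nat) (A : 'M[R]_n) : rel 'I_n :=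
  fun i j => A i j != 0.

(* a directed cycle, given as a nonempty duplicate-free vertex sequence
   [v_1; ...; v_l] with edges v_1->v_2->...->v_l->v_1 *)
Definition is_dcycle (R : comNzRingType) (n : nat) (A : 'M[R]_n)
  (c : seq 'I_n) : bool :=
  [&& c != [::], uniq c & path.cycle (edgeA A) c].

(* two sequences represent the same directed cycle iff one is a rotation
   of the other *)
Definition same_cycle (n : nat) (c d : seq 'I_n) : bool :=
  has (fun k => rot k c == d) (iota 0 (size c)).

Definition cyc_len (n : nat) (c : seq 'I_n) : nat := size c.
Definition cyc_weight (R : comNzRingType) (n : nat) (A : 'M[R]_n)
  (c : seq 'I_n) : R :=
  \prod_(i <- c) A i (next c i).

(* Main.v *)
Require Import Defs.
From HB Require Import structures.
From mathcomp Require Import all_boot all_order all_algebra all_fingroup.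
Import Order.TTheory GRing.Theory Num.Theory.
Local Open Scope ring_scope.
Set Implicit Arguments. Unset Strict Implicit.

Definition gA (R : realFieldType) n (A : 'M[R]_n) (i : 'I_n) : 'I_n :=
  odflt i [pick j | A i j != 0].

Lemma gP (R : realFieldType) n (A : 'M[R]_n) : omega01 A ->
  forall i j, A i j != 0 -> j = gA A i.
Proof.
case=> h0 _ _ h1 i j Aij; rewrite /gA; case: pickP => [k Aik|/(_ j)] /=; last by rewrite Aij.
by apply: (h1 i); rewrite lt_def ?Aij ?Aik h0.
Qed.

Lemma gNi (R : realFieldType) n (A : 'M[R]_n) : omega01 A ->
  forall i, A i (gA A i) != 0 -> gA A i != i.
Proof. by case=> _ _ hd _ i; apply: contraNneq => ->; rewrite hd eqxx. Qed.

Lemma Aexp (R : realFieldType) n (A : 'M[R]_n) : omega01 A ->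
  forall i j, A i j = if j == gA A i then A i (gA A i) else 0.
Proof.
move=> hA i j; case: eqP => [->//|ne]; apply/eqP; apply: contraT => nz.
by case: ne; apply: gP.
Qed.

Lemma fcyc_traject (T : eqType) (f : T -> T) x s :
  fcycle f (x :: s) -> x :: s = traject f x (size s).+1 /\ iter (size s).+1 f x = x.
Proof.
rewrite /= => /fpathP [m hm].
have hs : size (rcons s x) = m by rewrite hm size_traject.
rewrite size_rcons in hs; subst m.
have : x :: rcons s x = traject f x (size s).+2 by rewrite hm.
rewrite trajectSr -rcons_cons => /rcons_inj [e1 e2].
by split; [congr (_ :: _) | rewrite -e2].
Qed.

Lemma fcyc_eq (T : eqType) (f : T -> T) x s t :
  uniq (x :: s) -> uniq (x :: t) -> fcycle f (x :: s) -> fcycle f (x :: t) ->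
  x :: s = x :: t.
Proof.
move=> us ut /fcyc_traject [es ies] /fcyc_traject [et iet].
suff eqsz : size s = size t by rewrite es et eqsz.
have key : forall m m', uniq (traject f x m') -> iter m f x = x -> (0 < m)%N -> (m < m')%N -> False.
  move=> m m' u im m0 mm'.
  have := @nth_uniq _ x (traject f x m') 0 m; rewrite size_traject.
  move=> /(_ (ltn_trans m0 mm') mm' u).
  rewrite !nth_traject ?(ltn_trans m0 mm') //= im eqxx.
  by case: m m0 {im mm'}.
case: (ltngtP (size s) (size t)) => // h.
- by exfalso; apply: (key (size s).+1 (size t).+1) => //; rewrite -et.
- by exfalso; apply: (key (size t).+1 (size s).+1) => //; rewrite -es.
Qed.

Lemma dcyc_fcycle (R : realFieldType) n (A : 'M[R]_n) c : omega01 A ->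
  is_dcycle A c -> fcycle (gA A) c.
Proof.
move=> hA /and3P [_ _ cc]; apply: sub_cycle cc => x y /= e.
by rewrite (gP hA e).
Qed.

Lemma same_rot (n : nat) (c d : seq 'I_n) j : c != [::] -> rot j c = d -> same_cycle c d.
Proof.
move=> cn e; apply/hasP; case: (ltnP j (size c)) => hj.
  by exists j; rewrite ?mem_iota ?e //.
exists 0%N; last by rewrite rot0 -e rot_oversize.
by rewrite mem_iota add0n lt0n size_eq0.
Qed.

Lemma same_of_shared (R : realFieldType) n (A : 'M[R]_n) c d z : omega01 A ->
  is_dcycle A c -> is_dcycle A d -> z \in c -> z \in d -> same_cycle c d.
Proof.
move=> hA dc dd zc zd.
have fc := dcyc_fcycle hA dc; have fd := dcyc_fcycle hA dd.
move: (dc) (dd) => /and3P [cn uc _] /and3P [dn ud _].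
case: (rot_to zc) => i s ei; case: (rot_to zd) => i' t ei'.
have E : rot i c = rot i' d.
  rewrite ei ei'; apply: (fcyc_eq (f := gA A)); rewrite -?ei -?ei' ?rot_uniq ?rot_cycle //.
case: d dn ud fd dd zd E ei' => // y t0 _ ud fd dd zd E ei'.
have yc : y \in c by rewrite -(mem_rot i) E mem_rot mem_head.
case: (rot_to yc) => j s2 ej.
apply: (same_rot (j := j)) => //.
rewrite ej; apply: (fcyc_eq (f := gA A)); rewrite -?ej ?rot_uniq ?rot_cycle //.
Qed.

Definition hS (R : realFieldType) n (A : 'M[R]_n) (S : {set 'I_n}) (i : 'I_n) : 'I_n :=
  if i \in S then gA A i else i.
Definition aA (R : realFieldType) n (A : 'M[R]_n) (i : 'I_n) : R := A i (gA A i).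
Definition term (R : realFieldType) n (A : 'M[R]_n) (S : {set 'I_n}) : R :=
  if injectiveb (hS A S) then \prod_(i in S) - aA A i else 0.

Lemma per_term (R : realFieldType) n (A : 'M[R]_n) : omega01 A ->
  per (1%:M - A) = \sum_(S : {set 'I_n}) term A S.
Proof.
move=> hA; rewrite /per.
have E1 : forall s : 'S_n, \prod_(i < n) (1%:M - A) i (s i) =
   \sum_(S : {set 'I_n}) \prod_i (if i \in S then - A i (s i) else (i == s i)%:R).
  move=> s; rewrite -bigA_distr; apply: eq_bigr => i _.
  by rewrite !mxE addrC.
under eq_bigr => s _ do rewrite E1.
rewrite exchange_big /=; apply: eq_bigr => S _.
have E2 : forall s : 'S_n,
  \prod_i (if i \in S then - A i (s i) else (i == s i)%:R) =
  if [forall i, s i == hS A S i] then \prod_(i in S) - aA A i else 0.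
  move=> s; case: (boolP [forall i, _]) => [/forallP H|].
    rewrite [RHS]big_mkcond; apply: eq_bigr => i _; have := H i; rewrite /hS /aA.
    by case: (i \in S) => /eqP ->; rewrite ?eqxx.
  rewrite negb_forall => /existsP [i Hi].
  rewrite (bigD1 i) //=; apply/eqP; rewrite mulf_eq0; apply/orP; left.
  rewrite /hS in Hi; case: (i \in S) Hi => Hi.
    by rewrite (Aexp hA) (negbTE Hi) oppr0.
  have -> : (i == s i) = false by apply/negbTE; rewrite eq_sym.
  by [].

under eq_bigr => s _ do rewrite E2.
rewrite /term; case: injectiveP => [inj|ninj].
  rewrite (bigD1 (perm inj)) //=.
  have -> : [forall i, perm inj i == hS A S i] by apply/forallP => i; rewrite permE.
  rewrite [X in _ + X]big1 ?addr0 // => s ne; case: forallP => // H; exfalso.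
  move/eqP: ne; apply; apply/permP => i; rewrite permE; apply/eqP/H.
rewrite big1 // => s _; case: forallP => // H; exfalso; apply: ninj.
by move=> x y; rewrite -(eqP (H x)) -(eqP (H y)) => /perm_inj.
Qed.

Lemma count2 (T : Type) (p : pred T) s x0 (j j' : 'I_(size s)) : j != j' ->
  p (nth x0 s j) -> p (nth x0 s j') -> (1 < count p s)%N.
Proof.
move=> ne pj pj'; rewrite -sum1_count (big_nth x0) big_mkord (bigD1 j) //=.
rewrite (bigD1 j') /=; last by rewrite pj' eq_sym.
by rewrite add1n ltnS leq_addr.
Qed.

Theorem mainTheorem7 (R : realFieldType) (n : nat) (A : 'M[R]_n)
  (cs : seq (seq 'I_n)) :
  omega01 A ->
  all (is_dcycle A) cs ->
  (forall c, is_dcycle A c -> count (same_cycle c) cs = 1%N) ->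
  per (1%:M - A) =
  \prod_(c <- cs) (1 + (-1) ^+ cyc_len c * cyc_weight A c).
Proof.
move=> hA hall hcnt.
set k := size cs.
pose C (j : 'I_k) := nth [::] cs j.
pose V (j : 'I_k) := [set x in C j].
pose W (T : {set 'I_k}) j := if j \in T then V j else set0.
pose U (T : {set 'I_k}) := \bigcup_j W T j.
pose x (j : 'I_k) := (-1) ^+ cyc_len (C j) * cyc_weight A (C j).
have F0 : forall j, is_dcycle A (C j) by move=> j; apply: (allP hall); apply: mem_nth.
have Fself : forall j, same_cycle (C j) (C j).
  by move=> j; apply: (same_rot (j := 0%N)); [case/and3P: (F0 j) | rewrite rot0].
have F1 : forall j j', j != j' -> [disjoint V j & V j'].
  move=> j j' ne; rewrite -setI_eq0; apply/eqP/setP => z; rewrite !inE.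
  apply/negP => /andP [zc zc'].
  have := hcnt _ (F0 j); move: (count2 (x0 := [::]) ne (Fself j) (same_of_shared hA (F0 j) (F0 j') zc zc')).
  by move=> h e; rewrite e in h.
have F2 : forall j, exists z, z \in V j.
  move=> j; rewrite /V; case/and3P: (F0 j); case: (C j) => // z s _ _ _; exists z.
  by rewrite inE mem_head.
have F3 : forall j i, i \in C j -> gA A i = next (C j) i /\ aA A i != 0.
  move=> j i ic; case/and3P: (F0 j) => _ _ cc.
  have e := next_cycle cc ic; rewrite /edgeA in e.
  by rewrite /aA -(gP hA e).
have memU : forall (T : {set 'I_k}) i, reflect (exists2 j, j \in T & i \in V j) (i \in U T).
  move=> T i; apply: (iffP bigcupP) => [[j _]|[j jT iV]].
    rewrite /W; case: ifP => // jT iV; first by exists j.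
    by rewrite inE in iV.
  by exists j => //; rewrite /W jT.
have UT : forall (T : {set 'I_k}) j, (j \in T) = (V j \subset U T).
  move=> T j; apply/idP/idP => [jT|/subsetP sub].
    by apply/subsetP => i iV; apply/memU; exists j.
  have [z zV] := F2 j; have /memU [j' j'T zV'] := sub z zV.
  case: (eqVneq j j') => [->//|ne].
  by have := disjointFr (F1 _ _ ne) zV; rewrite zV'.
have Uinj : injective U.
  by move=> T1 T2 e; apply/setP => j; rewrite !UT e.
have P4 : forall T, term A (U T) = \prod_(j in T) x j.
  move=> T; rewrite /term.
  have gV : forall j i, i \in V j -> gA A i \in V j.
    by move=> j i; rewrite !inE => ic; rewrite (F3 j i ic).1 mem_next.
  have inj : injective (hS A (U T)).
    move=> i1 i2; rewrite /hS.
    case: (boolP (i1 \in U T)) => h1; case: (boolP (i2 \in U T)) => h2 //.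
    - case/memU: h1 => j1 _ v1; case/memU: h2 => j2 _ v2 e.
      case: (eqVneq j1 j2) => [ej|ne]; last first.
        by have := disjointFr (F1 _ _ ne) (gV _ _ v1); rewrite e gV.
      subst j2; move: v1 v2; rewrite !inE => v1 v2.
      move: e; rewrite (F3 _ _ v1).1 (F3 _ _ v2).1 => e.
      case/and3P: (F0 j1) => _ uc _.
      by rewrite -(prev_next uc i1) e prev_next.
    - move=> e; case/memU: (h1) => j1 j1T v1.
      have := gV _ _ v1; rewrite e => v2.
      by case/negP: h2; apply/memU; exists j1.
    - move=> e; case/memU: (h2) => j2 j2T v2.
      have := gV _ _ v2; rewrite -e => v1.
      by case/negP: h1; apply/memU; exists j2.
  rewrite (introT (injectiveP _) inj) /U partition_disjoint_bigcup; last first.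
    move=> j j' ne; rewrite /W; case: ifP => _; case: ifP => _;
      rewrite -?setI_eq0 ?setI0 ?set0I ?eqxx //.
    by rewrite setI_eq0 F1.
  rewrite [RHS]big_mkcond; apply: eq_bigr => j _; rewrite /W; case: ifP => jT.
    rewrite prodrN cardsE; case/and3P: (F0 j) => _ uc _.
    rewrite (card_uniqP uc) /x /cyc_len; congr (_ * _).
    rewrite (eq_bigl (fun i => i \in C j)); last by move=> i; rewrite inE.
    rewrite -big_uniq //; apply: eq_big_seq => i ic.
    by rewrite /aA (F3 j i ic).1.
  by apply: big_pred0 => i; rewrite inE.

have P3 : forall S, term A S != 0 -> S = U [set j | V j \subset S].
  move=> S; rewrite /term; case: injectiveP => [inj|_]; last by rewrite eqxx.
  move=> nz.
  have anz : forall i, i \in S -> aA A i != 0.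
    move=> i iS; apply/negP => /eqP a0; move/eqP: nz; apply.
    by rewrite (bigD1 i) //= a0 oppr0 mul0r.
  have gS : forall i, i \in S -> gA A i \in S.
    move=> i iS; apply: contraT => ng.
    have : hS A S (gA A i) = hS A S i by rewrite /hS (negbTE ng) iS.
    move/inj => e; have := gNi hA (anz i iS); by rewrite e eqxx.
  apply/setP => i; apply/idP/idP; last first.
    by case/memU => j; rewrite inE => /subsetP sub iV; exact: sub _ iV.
  move=> iS; pose p := perm inj; pose o := fingraph.orbit p i.
  have pS : forall y, y \in S -> p y = gA A y by move=> y yS; rewrite permE /hS yS.
  have oS : forall y, y \in o -> y \in S.
    move=> y /trajectP [m _ ->]; elim: m => //= m IH.
    by rewrite pS // gS.
  have od : is_dcycle A o.
    apply/and3P; split.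
    - by apply/eqP => e; have := in_orbit p i; rewrite -/o e.
    - exact: orbit_uniq.
    - apply: (sub_in_cycle (P := mem S) (e := frel p)); last exact: cycle_orbit (@perm_inj _ p) i.
        move=> y z yS _ /= /eqP <-; rewrite pS // /edgeA.
        exact: anz.
      by apply/allP => y /oS.
  have : has (same_cycle o) cs by rewrite has_count hcnt.
  case/hasP => d dcs /hasP [m _ /eqP e].
  have jlt : (index d cs < k)%N by rewrite index_mem.
  have Cj : C (Ordinal jlt) = d by rewrite /C /= nth_index.
  apply/memU; exists (Ordinal jlt).
    rewrite inE; apply/subsetP => y; rewrite /V inE Cj -e mem_rot; exact: oS.
  by rewrite /V inE Cj -e mem_rot in_orbit.

transitivity (\sum_(S : {set 'I_n}) term A S); first exact: per_term hA.
rewrite (bigID (fun S => S \in U @: setT)) /=.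
rewrite [X in _ + X]big1 ?addr0; last first.
  move=> S nS; apply/eqP; apply: contraNT nS => /P3 ->.
  by apply: imset_f.
rewrite big_imset /=; last by move=> T1 T2 _ _; apply: Uinj.
rewrite (big_nth [::]) big_mkord.
under [RHS]eq_bigr => j _ do rewrite addrC.
rewrite bigA_distr; apply: eq_big => [T|T _]; first by rewrite inE.
by rewrite P4 big_mkcond.
Qed.
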